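(* Let $\mathcal{X}$ be a connected $n$-premaniplex with base flag $x_0$ and $N=\operatorname{Stab}_{\mathcal{C}^n}(x_0)$, and let $(\mathcal{Y},\eta)$ be an $(n,m)$-voltage operator that preserves connectivity, with base flag $y_0$ of $\mathcal{Y}$, $L=\operatorname{Stab}_{\mathcal{C}^m}(y_0)$ and $\zeta:L\to\mathcal{C}^n$, $\zeta(\omega)=\eta(W_\omega(y_0))$. If $\upsilon\in\operatorname{N}_{\mathcal{C}^m}(\zeta^{-1}(N))\setminus L$, then $\mathcal{X}$ covers the premaniplex $\mathcal{Z}_\upsilon=\mathcal{C}^n/\zeta(L\cap L^\upsilon)$.
   Context: An $n$-premaniplex is an edge-coloured graph (semi-edges and parallel edges allowed) with colours $\{0,\dots,n-1\}$ such that every vertex (flag) is the start of exactly one dart of each colour, and for $|i-j|\ge2$ alternating $i,j$-paths of length 4 are closed; $x^i$ is the $i$-adjacent flag of $x$. $\mathcal{C}^n=\langle r_0,\dots,r_{n-1}\mid r_i^2,\ (r_ir_j)^2\ (|i-j|\ge2)\rangle$ acts on the left on flags by $r_ix=x^i$. A covering is a surjective map of flags preserving $i$-adjacency for all $i$. $L^\upsilon=\upsilon^{-1}L\upsilon$. For a subgroup $K\le\mathcal{C}^n$, the coset premaniplex $\mathcal{C}^n/K$ has flags the left cosets $\omega K$ with $(\omega K)^i=r_i\omega K$. For a flag $y$ of an $m$-premaniplex $\mathcal{Y}$ and $\omega\in\mathcal{C}^m$, $W_\omega(y)$ is the homotopy class of paths from $y$ whose colour sequence $i_1,\dots,i_k$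 satisfies $r_{i_k}\cdots r_{i_1}=\omega$; these form the fundamental groupoid $\Pi(\mathcal{Y})$. A voltage assignment $\eta:\Pi(\mathcal{Y})\to\mathcal{C}^n$ satisfies $\eta(W_1W_2)=\eta(W_2)\eta(W_1)$; $(\mathcal{Y},\eta)$ is an $(n,m)$-voltage operator. $\mathcal{X}\rtimes_\eta\mathcal{Y}$ has flags $\mathcal{X}\times\mathcal{Y}$ and $(x,y)^i=(\eta(W_{r_i}(y))x,r_iy)$, $i\in\{0,\dots,m-1\}$. The operator preserves connectivity if $\mathcal{X}\rtimes_\eta\mathcal{Y}$ is connected whenever $\mathcal{X}$ is. *)

(* Defs.v *)
From mathcomp Require Import all_boot.
From Stdlib Require Import FunctionalExtensionality.
Unset Strict Implicit. Unset Printing Implicit Defensive.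

(* An element of the group
   C^n = < r_0,...,r_{n-1} | r_i^2, (r_i r_j)^2 (|i-j|>=2) >
   is represented by a word [:: a1; ...; ak] standing for r_{a1} ... r_{ak};
   product = concatenation, identity = [::], inverse = rev. *)
Definition far {n : nat} (i j : 'I_n) : bool := (i.+1 < j) || (j.+1 < i).

(* Equality in C^n: the congruence generated by the defining relations. *)
Inductive weq {n : nat} : seq 'I_n -> seq 'I_n -> Prop :=
| weq_refl u : weq u u
| weq_sym u v : weq u v -> weq v u
| weq_trans u v w : weq u v -> weq v w -> weq u w
| weq_cat u u' v v' : weq u u' -> weq v v' -> weq (u ++ v) (u' ++ v')
| weq_invol (i : 'I_n) : weq [:: i; i] [::]
| weq_comm (i j : 'I_n) : far i j -> weq [:: i; j; i; j] [::].

(* A "subset" of C^n, as a predicate on words (used only for weq-closed ones). *)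
Definition subgrp (n : nat) := seq 'I_n -> Prop.

(* An edge-coloured graph with colours 'I_n in which every flag is the start of
   exactly one dart of each colour: adj i x = x^i (semi-edge when adj i x = x). *)
Record adjsys (n : nat) := AdjSys { flag :> Type; adj : 'I_n -> flag -> flag }.
Arguments adj {n} a i x.
Arguments flag {n} a.

Definition is_premaniplex {n : nat} (X : adjsys n) : Prop :=
  (forall (i : 'I_n) (x : X), adj X i (adj X i x) = x) /\
  (forall (i j : 'I_n) (x : X), far i j ->
      adj X j (adj X i (adj X j (adj X i x))) = x).

Fixpoint act {n : nat} (X : adjsys n) (w : seq 'I_n) (x : X) : X :=
  match w with
  | [::] => x
  | i :: w' => adj X i (act X w' x)
  end.

Definition connected {n : nat} (X : adjsys n) : Prop :=
  forall x y : X, exists w : seq 'I_n, act X w x = y.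

Definition stab {n : nat} (X : adjsys n) (x0 : X) : subgrp n :=
  fun w => act X w x0 = x0.

(* A voltage assignment on the fundamental groupoid of Y: the homotopy class
   W_w(y) is identified with the pair (y, w), w in C^m; eta y w = eta(W_w(y)).
   Well-definedness on C^m and eta(W1 W2) = eta(W2) eta(W1), where
   W_w(y) W_w'(w y) = W_{w' w}(y). *)
Definition is_voltage {n m : nat} (Y : adjsys m)
    (eta : Y -> seq 'I_m -> seq 'I_n) : Prop :=
  (forall (y : Y) (w w' : seq 'I_m), weq w w' -> weq (eta y w) (eta y w')) /\
  (forall (y : Y) (w w' : seq 'I_m),
      weq (eta y (w' ++ w)) (eta (act Y w y) w' ++ eta y w)).

Definition vprod {n m : nat} (X : adjsys n) (Y : adjsys m)
    (eta : Y -> seq 'I_m -> seq 'I_n) : adjsys m :=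
  @AdjSys m (X * Y)%type
    (fun i p => (act X (eta p.2 [:: i]) p.1, adj Y i p.2)).

Definition preserves_connectivity {n m : nat} (Y : adjsys m)
    (eta : Y -> seq 'I_m -> seq 'I_n) : Prop :=
  forall X : adjsys n, is_premaniplex X -> connected X ->
    connected (vprod X Y eta).

Definition covers {n : nat} (X Z : adjsys n) : Prop :=
  exists f : X -> Z, (forall z : Z, exists x : X, f x = z) /\
    (forall (i : 'I_n) (x : X), f (adj X i x) = adj Z i (f x)).

Definition coset {n : nat} (K : subgrp n) (w : seq 'I_n) : seq 'I_n -> Prop :=
  fun v => K (rev w ++ v).

Definition coset_flag {n : nat} (K : subgrp n) :=
  {S : seq 'I_n -> Prop | exists w, S = coset K w}.

Lemma coset_adj_proof {n : nat} (K : subgrp n) (i : 'I_n) (S : coset_flag K) :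
  exists w, (fun v => sval S (i :: v)) = coset K w.
Proof.
case: S => S [w Sw] /=; rewrite Sw; exists (i :: w).
apply: functional_extensionality => v.
by rewrite /coset rev_cons cat_rcons.
Qed.

Definition coset_premaniplex {n : nat} (K : subgrp n) : adjsys n :=
  @AdjSys n (coset_flag K)
    (fun i S => exist _ (fun v => sval S (i :: v)) (coset_adj_proof K i S)).

(* Conjugate H^u = u^{-1} H u. *)
Definition conj_sub {n : nat} (H : subgrp n) (u : seq 'I_n) : subgrp n :=
  fun w => H (u ++ w ++ rev u).

Definition normalizes {n : nat} (u : seq 'I_n) (H : subgrp n) : Prop :=
  forall w, H w <-> conj_sub H u w.

Definition sub_meet {n : nat} (H K : subgrp n) : subgrp n :=
  fun w => H w /\ K w.

Definition zeta_preim {n m : nat} (Y : adjsys m)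
    (eta : Y -> seq 'I_m -> seq 'I_n) (y0 : Y) (N : subgrp n) : subgrp m :=
  fun w => stab Y y0 w /\ N (eta y0 w).

Definition zeta_image {n m : nat} (Y : adjsys m)
    (eta : Y -> seq 'I_m -> seq 'I_n) (y0 : Y) (H : subgrp m) : subgrp n :=
  fun v => exists w, H w /\ weq v (eta y0 w).

(* Main.v *)
From Stdlib Require Import FunctionalExtensionality PropExtensionality ProofIrrelevance ClassicalEpsilon.
Require Import Defs.
From mathcomp Require Import all_boot.

Lemma wcat {n} {u u' v v' : seq 'I_n} : weq u u' -> weq v v' -> weq (u ++ v) (u' ++ v').
Proof. exact: weq_cat. Qed.
Lemma wsym {n} {u v : seq 'I_n} : weq u v -> weq v u.
Proof. exact: weq_sym. Qed.
Lemma wtrans {n} (v u w : seq 'I_n) : weq u v -> weq v w -> weq u w.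
Proof. exact: weq_trans. Qed.

Lemma weq_rev_cancel {n} (u : seq 'I_n) : weq (rev u ++ u) [::].
Proof.
elim: u => [|i u IH]; first by apply: weq_refl.
rewrite rev_cons cat_rcons.
apply: (wtrans (rev u ++ u)) => //.
apply: wcat; first exact: weq_refl.
exact (wcat (weq_invol i) (weq_refl u)).
Qed.

Lemma weq_cancel_r {n} (u : seq 'I_n) : weq (u ++ rev u) [::].
Proof. by have := weq_rev_cancel (rev u); rewrite revK. Qed.

Lemma act_cat {n} (X : adjsys n) w1 w2 (x : X) :
  act X (w1 ++ w2) x = act X w1 (act X w2 x).
Proof. by elim: w1 => [|i w IH] //=; rewrite IH. Qed.

Lemma act_weq {n} {X : adjsys n} (HX : is_premaniplex X) {u v} :
  weq u v -> forall x, act X u x = act X v x.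
Proof.
elim.
- by [].
- by move=> u0 v0 H0 IH x; rewrite IH.
- by move=> u0 v0 w0 H1 IH1 H2 IH2 x; rewrite IH1 IH2.
- by move=> u0 u1 v0 v1 H1 IH1 H2 IH2 x; rewrite !act_cat IH2 IH1.
- by move=> i x /=; rewrite HX.1.
- move=> i j hf x /=; apply: HX.2; by rewrite /far orbC.
Qed.

Lemma eta_nil {n m} {Y : adjsys m} {eta : Y -> seq 'I_m -> seq 'I_n}
  (Heta : is_voltage Y eta) y : weq (eta y [::]) [::].
Proof.
have h : weq (eta y [::]) (eta y [::] ++ eta y [::]) := Heta.2 y [::] [::].
set e := eta y [::] in h *.
apply: wsym.
apply: (wtrans (rev e ++ e)); first exact: wsym (weq_rev_cancel e).
apply: (wtrans ((rev e ++ e) ++ e)).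
  by rewrite -catA; apply: wcat => //; apply: weq_refl.
exact: (wcat (weq_rev_cancel e) (weq_refl e)).
Qed.

Lemma act_vprod {n m} {X : adjsys n} (HX : is_premaniplex X) {Y : adjsys m}
  {eta : Y -> seq 'I_m -> seq 'I_n} (Heta : is_voltage Y eta) w (x : X) (y : Y) :
  act (vprod X Y eta) w (x, y) = (act X (eta y w) x, act Y w y).
Proof.
elim: w => [|i w IH] /=.
  by rewrite (act_weq HX (eta_nil Heta y) x).
rewrite IH /=; congr (_, _); rewrite -act_cat; symmetry.
exact: (act_weq HX (Heta.2 y w [:: i]) x).
Qed.

Lemma cflag_eq {n} {K : subgrp n} (S T : coset_flag K) : sval S = sval T -> S = T.
Proof.
case: S T => [S pS] [T pT] /= E; subst; f_equal; apply: proof_irrelevance.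
Qed.

Lemma act_coset {n} (K : subgrp n) w (S : coset_premaniplex K) :
  sval (act _ w S) = fun v => sval S (rev w ++ v).
Proof.
elim: w => [|i w IH] //=.
rewrite IH; apply: functional_extensionality => v.
by rewrite rev_cons cat_rcons.
Qed.

Lemma coset_ext {n} {K : subgrp n} (Kc : forall a b, weq a b -> K a -> K b)
  w a b : weq a b -> forall v, coset K w (a ++ v) = coset K w (b ++ v).
Proof.
move=> h v; rewrite /coset; apply: propositional_extensionality; split => H.
  exact: (Kc _ _ (wcat (weq_refl (rev w)) (wcat h (weq_refl v))) H).
exact: (Kc _ _ (wcat (weq_refl (rev w)) (wcat (wsym h) (weq_refl v))) H).
Qed.

Lemma coset_pm {n} {K : subgrp n} (Kc : forall a b, weq a b -> K a -> K b) :
  is_premaniplex (coset_premaniplex K).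
Proof.
split.
- move=> i S; apply: cflag_eq.
  change (sval (act _ [:: i; i] S) = sval S); rewrite act_coset.
  case: S => S0 [w E]; subst S0 => /=; apply: functional_extensionality => v.
  exact (coset_ext Kc w _ _ (weq_invol i) v).
- move=> i j S hf; apply: cflag_eq.
  change (sval (act _ [:: j; i; j; i] S) = sval S); rewrite act_coset.
  case: S => S0 [w E]; subst S0 => /=; apply: functional_extensionality => v.
  exact (coset_ext Kc w _ _ (weq_comm i j hf) v).
Qed.

Lemma coset_conn {n} {K : subgrp n} (Kc : forall a b, weq a b -> K a -> K b) :
  connected (coset_premaniplex K).
Proof.
move=> [S [a Ea]] [T [b Eb]]; subst S T; exists (b ++ rev a); apply: cflag_eq.
rewrite act_coset /=; apply: functional_extensionality => v.
rewrite rev_cat revK /coset; apply: propositional_extensionality.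
have E : weq (rev a ++ ((a ++ rev b) ++ v)) (rev b ++ v).
  rewrite !catA; exact: (wcat (wcat (weq_rev_cancel a) (weq_refl _)) (weq_refl _)).
by split; apply: Kc => //; apply: wsym.
Qed.

Theorem lemma5p6 (n m : nat) (X : adjsys n) (HX : is_premaniplex X)
  (HXc : connected X) (x0 : X)
  (Y : adjsys m) (HY : is_premaniplex Y)
  (eta : Y -> seq 'I_m -> seq 'I_n) (Heta : is_voltage Y eta)
  (Hpres : preserves_connectivity Y eta) (y0 : Y) (ups : seq 'I_m)
  (Hnorm : normalizes ups (zeta_preim Y eta y0 (stab X x0)))
  (HnotL : ~ stab Y y0 ups) :
  covers X (coset_premaniplex
    (zeta_image Y eta y0 (sub_meet (stab Y y0) (conj_sub (stab Y y0) ups)))).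
Proof.
set K := zeta_image Y eta y0 (sub_meet (stab Y y0) (conj_sub (stab Y y0) ups)).
have Kc : forall a b, weq a b -> K a -> K b.
  move=> a b hab [w [hw hw']]; exists w; split => //.
  exact: weq_trans (wsym hab) hw'.
have Kclose : forall a b, K a -> K b -> K (a ++ b).
  move=> a b [w1 [[h1L h1U] e1]] [w2 [[h2L h2U] e2]].
  rewrite /conj_sub /stab in h1U h2U h1L h2L.
  exists (w1 ++ w2); split; first split.
  - by rewrite /stab act_cat h2L h1L.
  - rewrite /conj_sub /stab.
    have E : weq (ups ++ (w1 ++ w2) ++ rev ups)
                 ((ups ++ w1 ++ rev ups) ++ (ups ++ w2 ++ rev ups)).
      apply: wsym; rewrite -!catA; apply: wcat; first exact: weq_refl.
      apply: wcat; first exact: weq_refl.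
      rewrite catA; exact: (wcat (weq_rev_cancel ups) (weq_refl _)).
    by rewrite (act_weq HY E) act_cat h2U h1U.
  - apply: (wtrans (eta y0 w1 ++ eta y0 w2)); first exact: wcat.
    have h := Heta.2 y0 w2 w1; rewrite h2L in h; exact: wsym.
have K1c : forall a b : seq 'I_n, weq a b -> (fun w => weq w [::]) a -> (fun w => weq w [::]) b.
  by move=> a b hab /= ha; apply: weq_trans (wsym hab) ha.
pose U := coset_premaniplex (fun w : seq 'I_n => weq w [::]).
have hc := Hpres U (coset_pm K1c) (coset_conn K1c).
have Kmain : forall a, stab X x0 a -> K a.
  move=> a Na.
  pose E : U := exist _ (coset _ [::]) (ex_intro _ [::] erefl).
  pose T : U := exist _ (coset _ a) (ex_intro _ a erefl).
  have [w hw] := hc (E, y0) (T, y0).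
  rewrite (act_vprod (coset_pm K1c) Heta) in hw; case: hw => hwU hwY.
  set e := eta y0 w in hwU.
  have := f_equal (fun S : U => sval S e) hwU.
  rewrite act_coset /= /coset /= => H.
  have h2 : weq (rev a ++ e) [::] by rewrite -H; exact: weq_rev_cancel.
  have hea : weq e a.
    apply: (wtrans ((a ++ rev a) ++ e)).
      exact: wsym (wcat (weq_cancel_r a) (weq_refl e)).
    have := wcat (weq_refl a) h2; rewrite cats0 catA; exact.
  have zp : zeta_preim Y eta y0 (stab X x0) w.
    split => //; rewrite /stab (act_weq HX hea); exact: Na.
  have [zp1 _] := (proj1 (Hnorm w) zp).
  exists w; split; first by split.
  exact: wsym.
pose Z := coset_premaniplex K.
pose Z0 : Z := exist _ (coset K [::]) (ex_intro _ [::] erefl).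
have WD1 : forall u v, act X u x0 = act X v x0 -> forall s, K (rev v ++ s) -> K (rev u ++ s).
  move=> u v h s hs.
  have N1 : stab X x0 (rev u ++ v).
    by rewrite /stab act_cat -h -act_cat (act_weq HX (weq_rev_cancel u)).
  have := Kclose _ _ (Kmain _ N1) hs; apply: Kc.
  rewrite -catA; apply: wcat; first exact: weq_refl.
  rewrite catA; exact: (wcat (weq_cancel_r v) (weq_refl s)).
have WD : forall u v, act X u x0 = act X v x0 -> act Z u Z0 = act Z v Z0.
  move=> u v h; apply: cflag_eq; rewrite !act_coset.
  apply: functional_extensionality => s; apply: propositional_extensionality.
  split => H; [exact (WD1 v u (esym h) s H) | exact (WD1 u v h s H)].
pose f (x : X) : Z := act Z (proj1_sig (constructive_indefinite_description _ (HXc x0 x))) Z0.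
exists f; split.
- move=> [S [a Ea]]; subst S; exists (act X a x0); rewrite /f.
  case: constructive_indefinite_description => w hw /=.
  rewrite (WD _ _ hw); apply: cflag_eq; rewrite act_coset /=.
  by [].
- move=> i x; rewrite /f.
  case: constructive_indefinite_description => w hw /=.
  case: constructive_indefinite_description => w' hw' /=.
  change (act Z w Z0 = act Z (i :: w') Z0); apply: WD.
  by rewrite hw /= hw'.
Qed.
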